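(* Let $G$ be a finite simple graph with $2i$ vertices, $i\ge1$, and let $e$ be a pair of distinct vertices of $G$. If $J\in\mathcal{E}\mathcal{C}(G+e)\setminus\mathcal{E}\mathcal{C}(G)$, then for $1\le k\le i$ the number of chains in $C_k(\emptyset;G+e)$ that are $e$-singular at $J$ equals $$\sum_{p+q=k-1,\ p,q\ge0}\Big(|C_p(J;G+e)|\cdot\sum_{J'\in\mathcal{E}\mathcal{C}(G|_J)}|C_q(\emptyset;G|_{J'})|\Big).$$
   Context: All graphs are finite simple graphs; $G|_I$ is the induced subgraph on $I\subseteq V(G)$. $\mathcal{E}\mathcal{C}(G)=\{I\subseteq V(G): G|_I \text{ has no connected component of odd order}\}$. For a pair $e$ of distinct vertices, $G+e$ is $G$ with $e$ added as an edge. For a graph $G$ of even order, $\mathcal{P}(G)=\mathcal{E}\mathcal{C}(G)\cup\{V(G)\}$, ordered by inclusion; for $I\in\mathcal{P}(G)$ and $k\ge0$, $C_k(I;G)$ is the set of chains $I=I_0\subsetneq\cdots\subsetneq I_k=V(G)$ with $I_j\in\mathcal{P}(G)$ for $1\le j\le k$; we set $|C_k(I;G)|=0$ unless $0\le k\le \frac{|V(G)|}{2}-\frac{|I|}{2}$. A chain $\emptyset=I_0\subsetneq\cdots\subsetneq I_k=V(G+e)$ in $C_k(\emptyset;G+e)$ is called $e$-singular at $I_\ell$ if $\ell$ is the smallest index with $I_\ell\notin\mathcal{E}\mathcal{C}(G)$. *)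

(* Defs.v *)
From mathcomp Require Import all_boot.
Set Implicit Arguments. Unset Strict Implicit. Unset Printing Implicit Defensive.

Section Graphs.
Variable T : finType.

Definition simple_graph (g : rel T) : Prop :=
  irreflexive g /\ symmetric g.

Definition add_edge (g : rel T) (u v : T) : rel T :=
  fun x y => [|| g x y, (x == u) && (y == v) | (x == v) && (y == u)].

Definition induced (g : rel T) (I : {set T}) : rel T :=
  fun x y => [&& g x y, x \in I & y \in I].

Definition comp (g : rel T) (I : {set T}) (x : T) : {set T} :=
  [set y in I | connect (induced g I) x y].

Definition no_odd_comp (g : rel T) (I : {set T}) : bool :=
  [forall x in I, ~~ odd #|comp g I x|].

(* EC(G|_V) : subsets I of V such that (G|_V)|_I = G|_I has no odd component. *)
Definition EC (g : rel T) (V : {set T}) : {set {set T}} :=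
  [set I : {set T} | (I \subset V) && no_odd_comp g I].

Definition Pos (g : rel T) (V : {set T}) : {set {set T}} := V |: EC g V.

Definition chains (g : rel T) (V I : {set T}) (k : nat) :
  {set {ffun 'I_k.+1 -> {set T}}} :=
  [set c : {ffun 'I_k.+1 -> {set T}} |
    [&& c ord0 == I, c ord_max == V,
        [forall j : 'I_k, c (inord j) \proper c (inord j.+1)] &
        [forall j : 'I_k.+1, (j != ord0) ==> (c j \in Pos g V)]]].

Definition singular_at (g : rel T) (k : nat) (c : {ffun 'I_k.+1 -> {set T}})
  (J : {set T}) : bool :=
  [exists l : 'I_k.+1,
    [&& c l \notin EC g setT,
        [forall j : 'I_k.+1, (j < l) ==> (c j \in EC g setT)] & c l == J]].

End Graphs.

(* Main.v *)
Require Import Defs.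
From mathcomp Require Import all_boot.
From mathcomp Require Import zify.
Set Implicit Arguments. Unset Strict Implicit. Unset Printing Implicit Defensive.


Section GraphLemma.
Variable T : finType.
Variable g : rel T.
Hypothesis gsym : symmetric g.
Variables u v : T.
Variable I : {set T}.
Hypotheses (uI : u \in I) (vI : v \in I).

Local Notation g' := (induced g I).
Local Notation h' := (induced (add_edge g u v) I).

Lemma g'sym : symmetric g'.
Proof. by move=> x y; rewrite /g' /induced gsym; case: (x \in I); case: (y \in I); rewrite ?andbF. Qed.

Lemma gsub : forall x y, g' x y -> h' x y.
Proof. by move=> x y; rewrite /g' /h' /induced /add_edge => /and3P[-> -> ->]. Qed.

Lemma hconn x y : connect h' x y =
  [|| connect g' x y, connect g' x u && connect g' v y
    | connect g' x v && connect g' u y].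
Proof.
apply/idP/idP.
- case/connectP=> p hp ->{y}.
  elim: p x hp => [|z p IH] x /=.
    by move=> _; rewrite connect0.
  case/andP=> hxz hp.
  move: (IH z hp).
  case: (boolP (g' x z)) => gxz.
    have cxz : connect g' x z by exact: connect1.
    case/or3P=> [c|/andP[c1 c2]|/andP[c1 c2]].
    + by rewrite (connect_trans cxz c).
    + by rewrite (connect_trans cxz c1) c2 orbT.
    + by rewrite (connect_trans cxz c1) c2 !orbT.
  move: hxz; rewrite /h' /induced /add_edge.
  case/and3P=> /or3P[e|/andP[/eqP xu /eqP zv]|/andP[/eqP xv /eqP zu]] xI zI.
    by move: gxz; rewrite /g' /induced e xI zI.
  + subst x z. case/or3P=> [c|/andP[c1 c2]|/andP[c1 c2]].
    * by rewrite connect0 c /= orbT.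
    * by rewrite connect0 c2 /= orbT.
    * by rewrite c2.
  + subst x z. case/or3P=> [c|/andP[c1 c2]|/andP[c1 c2]].
    * by rewrite connect0 c /= !orbT.
    * by rewrite c2.
    * by rewrite connect0 c2 /= !orbT.
- have cs : subrel (connect g') (connect h').
    by apply: connect_sub => a b /gsub; exact: connect1.
  have huv : h' u v by rewrite /h' /induced /add_edge !eqxx uI vI /= ?orbT.
  have hvu : h' v u by rewrite /h' /induced /add_edge !eqxx uI vI /= ?orbT.
  case/or3P=> [/cs //|/andP[c1 c2]|/andP[c1 c2]].
  + apply: connect_trans (cs _ _ c1) _; apply: connect_trans (connect1 huv) _.
    exact: cs.
  + apply: connect_trans (cs _ _ c1) _; apply: connect_trans (connect1 hvu) _.
    exact: cs.
Qed.


Lemma even_union (x a : T) : a \in I -> ~~ odd #|Defs.comp g I x| -> ~~ odd #|Defs.comp g I a| ->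
  ~~ odd #|Defs.comp g I x :|: Defs.comp g I a|.
Proof.
move=> aI ox oa.
have cs := sym_connect_sym g'sym.
case: (boolP (connect g' x a)) => cxa.
  have -> : Defs.comp g I x :|: Defs.comp g I a = Defs.comp g I x.
    apply/setP=> y; rewrite !inE.
    case: (y \in I) => //=.
    case: (boolP (connect g' x y)) => //= nxy.
    by apply/negbTE/negP => c; move: nxy; rewrite (connect_trans cxa c).
  by [].
rewrite cardsU.
have -> : Defs.comp g I x :&: Defs.comp g I a = set0.
  apply/setP=> y; rewrite !inE.
  apply/negbTE/negP => /andP[/andP[_ c1] /andP[_ c2]].
  by rewrite cs in c2; move: cxa; rewrite (connect_trans c1 c2).
by rewrite cards0 subn0 oddD negb_add (negbTE ox) (negbTE oa).
Qed.

Lemma noc_add : no_odd_comp g I -> no_odd_comp (add_edge g u v) I.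
Proof.
move=> /forallP H; apply/forallP => x; apply/implyP => xI.
have Hc y : y \in I -> ~~ odd #|Defs.comp g I y| by move=> yI; exact: (implyP (H y) yI).
have cs := sym_connect_sym g'sym.
have ce : Defs.comp (add_edge g u v) I x = [set y in I | [|| connect g' x y,
   connect g' x u && connect g' v y | connect g' x v && connect g' u y]].
  by apply/setP=> y; rewrite !inE -hconn.
rewrite ce.
case: (boolP (connect g' x u)) => cxu.
  have -> : [set y in I | [|| connect g' x y,
   true && connect g' v y | connect g' x v && connect g' u y]] = Defs.comp g I x :|: Defs.comp g I v.
    apply/setP=> y; rewrite !inE /=.
    case: (y \in I) => //=.
    case: (boolP (connect g' x y)) => //= nxy.
    case: (connect g' v y) => //=.
    by apply/negbTE/negP => /andP[_ c]; move: nxy; rewrite (connect_trans cxu c).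
  by apply: even_union => //; apply: Hc.
case: (boolP (connect g' x v)) => cxv.
  have -> : [set y in I | [|| connect g' x y,
   false && connect g' v y | true && connect g' u y]] = Defs.comp g I x :|: Defs.comp g I u.
    by apply/setP=> y; rewrite !inE /= andb_orr.
  by apply: even_union => //; apply: Hc.
have -> : [set y in I | [|| connect g' x y,
   false && connect g' v y | false && connect g' u y]] = Defs.comp g I x.
  by apply/setP=> y; rewrite !inE /= !orbF.
exact: Hc.
Qed.

End GraphLemma.

Lemma EC_add (T : finType) (g : rel T) u v (I V : {set T}) : symmetric g ->
  I \in EC g V -> I \in EC (add_edge g u v) V.
Proof.
move=> gs; rewrite !inE; case/andP=> sIV H; rewrite sIV /=.
case: (boolP ((u \in I) && (v \in I))) => [/andP[uI vI]|nuv].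
  exact: (noc_add gs uI vI).
have E : induced (add_edge g u v) I =2 induced g I.
  move=> x y; rewrite /induced /add_edge.
  case: (boolP (x \in I)) => xI; case: (boolP (y \in I)) => yI; rewrite ?andbF //=.
  case: (g x y) => //=; rewrite andbT.
  apply/negbTE/negP => /orP[/andP[/eqP ex /eqP ey]|/andP[/eqP ex /eqP ey]];
  by move: nuv; rewrite -ex -ey xI yI.
rewrite /no_odd_comp /Defs.comp.
by under eq_forallb => x do under eq_finset => y do rewrite (eq_connect E).
Qed.




Section Chains.
Variable T : finType.

Definition C n (c : {ffun 'I_n.+1 -> {set T}}) (j : nat) := c (inord j).

Lemma Cval n (c : {ffun 'I_n.+1 -> {set T}}) (j : 'I_n.+1) : C c j = c j.
Proof. by rewrite /C inord_val. Qed.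

Lemma Cffun n (f : nat -> {set T}) j : j <= n ->
  C [ffun i : 'I_n.+1 => f i] j = f j.
Proof. by move=> jn; rewrite /C ffunE; congr f; apply: inordK. Qed.

Lemma chainsE (g : rel T) V I n c : c \in chains g V I n =
  [&& C c 0 == I, C c n == V, [forall j : 'I_n, C c j \proper C c j.+1] &
      [forall j : 'I_n.+1, (0 < j) ==> (C c j \in Pos g V)]].
Proof.
rewrite inE.
have -> : c ord0 = C c 0 by rewrite /C; congr (c _); apply: val_inj; rewrite /= inordK.
have -> : c ord_max = C c n by rewrite /C; congr (c _); apply: val_inj; rewrite /= inordK.
congr [&& _, _, _ & _].
by apply: eq_forallb => j; rewrite Cval lt0n.
Qed.

Lemma chainsP (g : rel T) V I n c : reflect
  [/\ C c 0 = I, C c n = V, (forall j, j < n -> C c j \proper C c j.+1) &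
      (forall j, 0 < j <= n -> C c j \in Pos g V)]
  (c \in chains g V I n).
Proof.
rewrite chainsE; apply: (iffP idP).
- case/and4P=> /eqP h0 /eqP hn /forallP hp /forallP hP; split=> //.
    by move=> j jn; exact: (hp (Ordinal jn)).
  by move=> j /andP[j0 jn]; exact: (implyP (hP (Ordinal (jn : j < n.+1))) j0).
- case=> h0 hn hp hP; rewrite h0 hn !eqxx /=; apply/andP; split.
    by apply/forallP=> j; apply: hp.
  by apply/forallP=> j; apply/implyP=> j0; apply: hP; rewrite j0 -ltnS ltn_ord.
Qed.

Lemma chain_mono n (c : {ffun 'I_n.+1 -> {set T}}) :
  (forall j, j < n -> C c j \proper C c j.+1) ->
  forall j j', j <= j' <= n -> C c j \subset C c j'.
Proof.
move=> hp j j'; elim: j' => [|j' IH].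
  by rewrite leqn0 => /andP[/eqP -> _].
case/andP; rewrite leq_eqVlt => /orP[/eqP -> //|jj' jn].
apply: subset_trans (IH _) (proper_sub (hp _ jn)).
by rewrite -ltnS jj' ltnW.
Qed.

Lemma card_sum (A : {set T}) : #|A| = \sum_x (x \in A).
Proof. by rewrite -sum1_card big_mkcond; apply: eq_bigr => x _; case: (x \in A). Qed.

End Chains.

Lemma card_sumF (U : finType) (A : {set U}) : #|A| = \sum_x (x \in A).
Proof. by rewrite -sum1_card big_mkcond; apply: eq_bigr => x _; case: (x \in A). Qed.

Lemma sum_unique (k : nat) (P : 'I_k -> bool) :
  (forall p1 p2, P p1 -> P p2 -> p1 = p2) -> \sum_(p < k) P p = [exists p, P p].
Proof.
move=> uq; case: existsP => [[p0 Hp0]|nex].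
  rewrite (bigD1 p0) //= Hp0 big1 // => p np.
  by case: (boolP (P p)) => // /(uq _ _ Hp0) e; move: np; rewrite e eqxx.
by rewrite big1 // => p _; case: (boolP (P p)) => // Pp; case: nex; exists p.
Qed.


Section Main.
Variable T : finType.
Variable g : rel T.
Hypothesis gsym : symmetric g.
Variables u v : T.
Variable J : {set T}.
Hypothesis JEC : J \in EC (add_edge g u v) setT.
Hypothesis JnEC : J \notin EC g setT.
Variable k : nat.

Local Notation h := (add_edge g u v).

Lemma Cmax n (c : {ffun 'I_n.+1 -> {set T}}) : c ord_max = C c n.
Proof. by rewrite -Cval. Qed.

Lemma C0 n (c : {ffun 'I_n.+1 -> {set T}}) : c ord0 = C c 0.
Proof. by rewrite -Cval. Qed.

Lemma set0EC (gg : rel T) V : set0 \in EC gg V.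
Proof. by rewrite inE sub0set /=; apply/forallP=> x; rewrite inE. Qed.

Lemma ECT (gg : rel T) V I : I \in EC gg V -> I \in EC gg setT.
Proof. by rewrite !inE subsetT => /andP[]. Qed.

Lemma PosEC (gg : rel T) V I : I \in EC gg V -> I \in Pos gg V.
Proof. by move=> H; rewrite /Pos inE H orbT. Qed.

Definition L q := [set d : {ffun 'I_q.+1 -> {set T}} |
   (d ord_max \in EC g J) && (d \in chains g (d ord_max) set0 q)].

Lemma LE q : #|L q| = \sum_(J' in EC g J) #|chains g J' set0 q|.
Proof.
rewrite -sum1_card (partition_big (fun d : {ffun 'I_q.+1 -> {set T}} => d ord_max) (fun J0 => J0 \in EC g J)) /=; last first.
  by move=> d; rewrite inE => /andP[].
apply: eq_bigr => J' HJ'; rewrite -sum1_card; apply: eq_bigl => d.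
rewrite !inE; apply/idP/idP.
  by case/andP=> /andP[_ H] /eqP e; rewrite -e.
move=> H; have e : d ord_max = J' by case/and4P: H => _ /eqP.
rewrite inE in HJ'; rewrite e eqxx andbT HJ' /=; rewrite e eqxx in H; exact: H.
Qed.

Lemma loEC q lo j : lo \in L q -> j <= q -> C lo j \in EC g setT.
Proof.
rewrite inE Cmax => /andP[HJ' /chainsP[h0 hq hp hP]] jq.
case: j jq => [|j] jq; first by rewrite h0 set0EC.
have := hP j.+1 jq; rewrite /Pos in_setU1 => /orP[/eqP ->|]; last exact: ECT.
exact: ECT HJ'.
Qed.

Definition sing (c : {ffun 'I_k.+1 -> {set T}}) l :=
  [&& C c l \notin EC g setT, [forall j : 'I_k.+1, (j < l) ==> (c j \in EC g setT)]
    & C c l == J].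

Definition Sp p := [set c in chains h setT set0 k | sing c (k - p)].

Definition F p (c : {ffun 'I_k.+1 -> {set T}}) :=
  ([ffun j : 'I_p.+1 => C c (k - p + j)], [ffun j : 'I_(k.-1 - p).+1 => C c j]).

Lemma Sp_card p : p < k -> #|Sp p| = #|chains h setT J p| * #|L (k.-1 - p)|.
Proof.
move=> pk.
set q := k.-1 - p.
have lq : k - p = q.+1 by rewrite /q; lia.
have lk : k - p <= k by lia.
rewrite -cardsX -(@card_in_imset _ _ (F p)); last first.
  move=> c1 c2; rewrite !inE => /andP[_ _] /andP[_ _] E.
  apply/ffunP=> j; rewrite -!Cval.
  case: (ltnP j (k - p)) => jl.
    have := congr1 (fun x => C x.2 j) E; rewrite /=.
    by rewrite (Cffun (n:=q) (fun j0 => C c1 j0)) ?(Cffun (n:=q) (fun j0 => C c2 j0)) //; lia.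
  have jk : j <= k by rewrite -ltnS ltn_ord.
  have := congr1 (fun x => C x.1 (j - (k - p))) E; rewrite /=.
  rewrite (Cffun (n:=p) (fun j0 => C c1 (k - p + j0))); last by lia.
  rewrite (Cffun (n:=p) (fun j0 => C c2 (k - p + j0))); last by lia.
  have -> : k - p + (j - (k - p)) = j by lia.
  by [].
suff -> : [set F p x | x in Sp p] = setX (chains h setT J p) (L q) by []. apply/eqP; rewrite eqEsubset; apply/andP; split.
  apply/subsetP => x /imsetP[c cS ->].
  move: cS; rewrite inE => /andP[/chainsP[h0 hk hp hP] /and3P[nEC /forallP fa /eqP CJ]].
  have hlt j : j < k - p -> C c j \in EC g setT.
    move=> jl; have jk : j < k.+1 by lia.
    by have := implyP (fa (Ordinal jk)) jl; rewrite -Cval.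
  have Cl j : j <= q -> C [ffun j0 : 'I_q.+1 => C c j0] j = C c j.
    exact: (Cffun (fun j0 => C c j0)).
  have Cu j : j <= p -> C [ffun j0 : 'I_p.+1 => C c (k - p + j0)] j = C c (k - p + j).
    exact: (Cffun (fun j0 => C c (k - p + j0))).
  rewrite in_setX /=; apply/andP; split.
    apply/chainsP; split.
    - by rewrite Cu // addn0.
    - by rewrite Cu // subnK // ltnW.
    - by move=> j jp; rewrite !Cu // ?addnS; [apply: hp; lia | lia].
    - by move=> j /andP[j0 jp]; rewrite Cu //; apply: hP; lia.
  rewrite inE Cmax Cl //; apply/andP; split.
    rewrite inE; apply/andP; split.
      by rewrite -CJ; apply: (chain_mono hp); lia.
    by have := hlt q ltac:(lia); rewrite inE => /andP[_ ->].
  apply/chainsP; split.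
  - by rewrite Cl.
  - by rewrite Cl.
  - by move=> j jq; rewrite !Cl //; [apply: hp; lia | lia].
  - move=> j /andP[j0 jq]; rewrite Cl; last by lia.
    apply: PosEC; rewrite inE; apply/andP; split; first by apply: (chain_mono hp); lia.
    by have := hlt j ltac:(lia); rewrite inE => /andP[_ ->].
apply/subsetP => -[up lo]; rewrite in_setX /= => /andP[upU loL].
have loL' := loL.
move: upU loL => /chainsP[u0 up_ uinc uP]; rewrite inE Cmax => /andP[HJ' /chainsP[l0 _ linc lP]].
pose f := fun j : nat => if j < k - p then C lo j else C up (j - (k - p)).
have Cc j : j <= k -> C [ffun j0 : 'I_k.+1 => f j0] j = f j.
  exact: (Cffun f).
apply/imsetP; exists [ffun j0 : 'I_k.+1 => f j0].
  rewrite inE; apply/andP; split.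
    apply/chainsP; split.
    - by rewrite Cc // /f ifT; [exact: l0 | lia].
    - rewrite Cc // /f ifF; last by lia.
      by have -> : k - (k - p) = p by lia.
    - move=> j jk; rewrite !Cc; try lia.
      rewrite /f; case: (ltnP j.+1 (k - p)) => j1.
        by rewrite ifT; [apply: linc; lia | lia].
      case: (ltnP j (k - p)) => j2.
        have ej : j = q by lia.
        have -> : j.+1 - (k - p) = 0 by lia.
        rewrite ej u0 properEneq; apply/andP; split.
          apply/negP => /eqP e; rewrite e in HJ'.
          by move: JnEC; rewrite (ECT HJ').
        by move: HJ'; rewrite inE => /andP[].
      have -> : j.+1 - (k - p) = (j - (k - p)).+1 by lia.
      by apply: uinc; lia.
    - move=> j /andP[j0 jk]; rewrite Cc // /f; case: (ltnP j (k - p)) => jl.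
        by apply: PosEC; apply: (EC_add _ _ gsym); apply: (loEC loL'); lia.
      case: (posnP (j - (k - p))) => [e|jp].
        by rewrite e u0; exact: PosEC JEC.
      by apply: uP; lia.
  rewrite /sing Cc // /f ltnn subnn u0 JnEC eqxx andbT /=.
  apply/forallP => j; apply/implyP => jl.
  have jk : j <= k by rewrite -ltnS ltn_ord.
  rewrite -Cval Cc // /f jl.
  by apply: (loEC loL'); lia.
rewrite /F; congr pair; apply/ffunP => j; rewrite ffunE Cc.
- rewrite /f ifF; last by lia.
  have -> : k - p + j - (k - p) = j by lia.
  by rewrite Cval.
- have := ltn_ord j; lia.
- rewrite /f ifT; first by rewrite Cval.
  have := ltn_ord j; lia.
- have := ltn_ord j; lia.
Qed.


Lemma sing_unique c (p1 p2 : 'I_k) : sing c (k - p1) -> sing c (k - p2) -> p1 = p2.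
Proof.
have H (a b : 'I_k) : k - a < k - b -> sing c (k - a) -> sing c (k - b) -> False.
  move=> ab /and3P[nE _ _] /and3P[_ /forallP fa _].
  have ak : k - a < k.+1 by lia.
  have := implyP (fa (Ordinal ak)) ab.
  by rewrite -Cval /= (negbTE nE).
move=> s1 s2; case: (ltngtP (k - p1) (k - p2)) => e.
- by case: (H _ _ e s1 s2).
- by case: (H _ _ e s2 s1).
- apply: val_inj => /=; have := ltn_ord p1; have := ltn_ord p2; lia.
Qed.

Lemma singE c : c \in chains h setT set0 k ->
  singular_at g c J = [exists p : 'I_k, sing c (k - p)].
Proof.
move/chainsP=> [h0 _ _ _].
apply/existsP/existsP.
  move=> [l /and3P[nE fa /eqP cl]].
  have l0 : 0 < l.
    rewrite lt0n; apply/negP => /eqP e.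
    by move: nE; rewrite -Cval e h0 set0EC.
  have lk : l <= k by rewrite -ltnS ltn_ord.
  have pk : k - l < k by lia.
  exists (Ordinal pk); rewrite /= (_ : k - (k - l) = l); last by lia.
  by rewrite /sing Cval nE cl eqxx fa.
move=> [p s].
have lk : k - p < k.+1 by lia.
exists (Ordinal lk); move: s; rewrite /sing -(Cval c (Ordinal lk)) /=.
by move=> /and3P[-> -> ->].
Qed.

Lemma countS : #|[set c in chains h setT set0 k | singular_at g c J]| =
  \sum_(p < k) #|Sp p|.
Proof.
rewrite card_sumF.
under [RHS]eq_bigr => p _ do rewrite card_sumF.
rewrite exchange_big /=; apply: eq_bigr => c _.
rewrite inE; case: (boolP (c \in chains h setT set0 k)) => cc /=.
  rewrite (singE cc).
  under eq_bigr => p _ do rewrite inE cc /=.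
  by rewrite sum_unique //; exact: sing_unique.
by rewrite big1 // => p _; rewrite inE (negbTE cc).
Qed.

End Main.

Unset Implicit Arguments.

Theorem mainTheorem6 (T : finType) (g : rel T) (i : nat) (u v : T)
  (J : {set T}) (k : nat) :
  simple_graph g -> #|T| = 2 * i -> 1 <= i -> u != v ->
  J \in EC (add_edge g u v) setT -> J \notin EC g setT ->
  1 <= k <= i ->
  #|[set c in chains (add_edge g u v) setT set0 k | singular_at g c J]| =
  \sum_(p < k)
     (#|chains (add_edge g u v) setT J p| *
      \sum_(J' in EC g J) #|chains g J' set0 (k.-1 - p)|).
Proof.
move=> [_ gsym] _ _ _ JEC JnEC _.
rewrite countS //.
apply: eq_bigr => p _.
by rewrite (Sp_card gsym JEC JnEC) // LE.
Qed.
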